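(* Let $k\ge 1$ and $n\ge 1$ be integers, let $\omega=(\omega_1,\omega_2,\ldots)$ be a sequence of integers (the weight vector), let $t_1,\ldots,t_k$ be indeterminates, and set $t_j:=0$ for $j>k$. Define the weighted isobaric polynomial $$P_{\omega,k,n}(t_1,\ldots,t_k)=\sum_{\alpha\vdash n}\binom{|\alpha|}{\alpha_1,\ldots,\alpha_k}\frac{\sum_{j=1}^k\omega_j\alpha_j}{|\alpha|}\,t_1^{\alpha_1}\cdots t_k^{\alpha_k},$$ where the sum runs over all $k$-tuples $\alpha=(\alpha_1,\ldots,\alpha_k)$ of nonnegative integers with $\sum_{j=1}^k j\alpha_j=n$, and $|\alpha|=\alpha_1+\cdots+\alpha_k$. Let $H_{+}$ be the $n\times n$ lower Hessenberg matrix whose entries are: for $1\le i\le n-1$, $(H_+)_{i,j}=t_{i-j+1}$ if $j\le i$, $(H_+)_{i,i+1}=1$, and $(H_+)_{i,j}=0$ if $j>i+1$; and in the last row $(H_+)_{n,j}=\omega_{n-j+1}t_{n-j+1}$ for $1\le j\le n$. That is, $$H_{+}=\begin{pmatrix} t_1&1&0&\cdots&0\\ t_2&t_1&1&\cdots&0\\ \vdots&\vdots&\vdots&\ddots&\vdots\\ t_{n-1}&t_{n-2}&t_{n-3}&\cdots&1\\ \omega_nt_n&\omega_{n-1}t_{n-1}&\omega_{n-2}t_{n-2}&\cdots&\omega_1t_1\end{pmatrix}.$$ Let $H_-$ be the same matrix except that every super-diagonal entry $1$ is replaced by $-1$. Then (a) $\operatorname{perm} H_+ = P_{\omega,k,n}(t_1,\ldots,t_k)$,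 and (b) $\det H_- = P_{\omega,k,n}(t_1,\ldots,t_k)$.
   Context: The permanent of a square matrix $M=(m_{ij})_{1\le i,j\le n}$ is $\operatorname{perm}M=\sum_{\sigma\in S_n}\prod_{i=1}^n m_{i,\sigma(i)}$, i.e. the determinant expansion with all signs taken to be $+$. *)

(* Defs.v *)
From HB Require Import structures.
From mathcomp Require Import all_boot all_order all_algebra all_fingroup.
From mathcomp Require Import mpoly.
Set Implicit Arguments. Unset Strict Implicit. Unset Printing Implicit Defensive.
Import Order.TTheory GRing.Theory Num.Theory.
Local Open Scope ring_scope.

Definition permanent (R : comNzRingType) (n : nat) (M : 'M[R]_n) : R :=
  \sum_(s : 'S_n) \prod_(i < n) M i (s i).

Definition multinomial (s : seq nat) : nat :=
  ((sumn s)`! %/ \prod_(x <- s) x`!)%N.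

(* t_j (1-based): the j-th indeterminate 'X_(j-1) for 1 <= j <= k, and 0 otherwise. *)
Definition tvar (k : nat) (j : nat) : {mpoly rat[k]} :=
  if (0 < j)%N then
    (if (insub j.-1 : option 'I_k) is Some i then 'X_i else 0)
  else 0.

(* The Hessenberg matrix H_s (0-based indices i, j : 'I_n), with super-diagonal
   entries equal to s (s = 1 gives H_+, s = -1 gives H_-).
   Weights w are 1-based: w j = omega_j (w 0 unused). *)
Definition Hmat (k n : nat) (w : nat -> int) (s : {mpoly rat[k]}) : 'M[{mpoly rat[k]}]_n :=
  \matrix_(i < n, j < n)
    if (i.+1 == n :> nat)%N then ((w (n - j)%N)%:~R : rat) *: tvar k (n - j)
    else if (j <= i)%N then tvar k (i - j).+1
    else if (j == i.+1 :> nat)%N then s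
    else 0.

(* The weighted isobaric polynomial P_{omega,k,n}(t_1,...,t_k).
   alpha ranges over k-tuples of nonnegative integers with sum_j j*alpha_j = n
   (each alpha_j <= n automatically, so bounding by 'I_n.+1 loses nothing). *)
Definition Pw (k n : nat) (w : nat -> int) : {mpoly rat[k]} :=
  \sum_(a : {ffun 'I_k -> 'I_n.+1} | (\sum_(j < k) j.+1 * a j)%N == n)
    (((multinomial [seq (a j : nat) | j <- enum 'I_k])%:R : rat)
      * ((\sum_(j < k) ((w j.+1)%:~R : rat) * (a j)%:R)
          / ((\sum_(j < k) (a j : nat))%N)%:R))
    *: \prod_(j < k) 'X_j ^+ a j.

Arguments tvar k j : clear implicits.
Arguments Hmat k n w s : clear implicits.
Arguments Pw k n w : clear implicits.

(* Main.v *)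
Require Import Defs.
From HB Require Import structures.
From mathcomp Require Import all_boot all_order all_algebra all_fingroup.
From mathcomp Require Import mpoly.
From mathcomp Require Import zify ring.
Import Order.TTheory GRing.Theory Num.Theory.
Local Open Scope ring_scope.

Section Perm.
Variable R : comNzRingType.

Lemma expand_pcofactor n (A : 'M[R]_n) i0 j0 :
  permanent (row' i0 (col' j0 A)) =
    \sum_(s : 'S_n | s i0 == j0) \prod_(k | i0 != k) A k (s k).
Proof.
case: n A i0 j0 => [|n] A i0 j0; first by case: i0.
rewrite (reindex (lift_perm i0 j0)); last first.
  pose ulsf i (s : 'S_n.+1) k := odflt k (unlift (s i) (s (lift i k))).
  have ulsfK i (s : 'S_n.+1) k: lift (s i) (ulsf i s k) = s (lift i k).
    rewrite /ulsf; have:= neq_lift i k.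
    by rewrite -(can_eq (permK s)) => /unlift_some[] ? ? ->.
  have inj_ulsf: injective (ulsf i0 _).
    move=> s; apply: can_inj (ulsf (s i0) s^-1%g) _ => k'.
    by rewrite {1}/ulsf ulsfK !permK liftK.
  exists (fun s => perm (inj_ulsf s)) => [s _ | s].
    by apply/permP=> k'; rewrite permE /ulsf lift_perm_lift lift_perm_id liftK.
  move/(s _ =P _) => si0; apply/permP=> k.
  case: (unliftP i0 k) => [k'|] ->; rewrite ?lift_perm_id //.
  by rewrite lift_perm_lift -si0 permE ulsfK.
rewrite /permanent.
apply: eq_big => [s | s _]; first by rewrite lift_perm_id eqxx.
case: (pickP 'I_n) => [k0 _ | n0]; last first.
  by rewrite !big1 // => [j /unlift_some[i] | i _]; have:= n0 i.
rewrite (reindex (lift i0)).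
  by apply: eq_big => [k | k _] /=; rewrite ?neq_lift // !mxE lift_perm_lift.
exists (fun k => odflt k0 (unlift i0 k)) => k; first by rewrite liftK.
by case/unlift_some=> k' -> ->.
Qed.

Lemma expand_perm_row n (A : 'M[R]_n) i0 :
  permanent A = \sum_j A i0 j * permanent (row' i0 (col' j A)).
Proof.
rewrite /permanent (partition_big (fun s : 'S_n => s i0) predT) //=.
apply: eq_bigr => j0 _; rewrite -/(permanent _) expand_pcofactor big_distrr /=.
apply: eq_bigr => s /eqP Dsi0.
rewrite (bigID (pred1 i0)) /= big_pred1_eq Dsi0; congr (_ * _).
by apply: eq_bigl => i; rewrite eq_sym.
Qed.

Lemma perm_tr n (A : 'M[R]_n) : permanent A^T = permanent A.
Proof.
rewrite /permanent (reindex_inj invg_inj) /=.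
apply: eq_bigr => s _; rewrite (reindex_inj (@perm_inj _ s)) /=.
by apply: eq_bigr => i _; rewrite mxE permK.
Qed.

Lemma expand_perm_col n (A : 'M[R]_n) j0 :
  permanent A = \sum_i A i j0 * permanent (row' i (col' j0 A)).
Proof.
rewrite -perm_tr (expand_perm_row _ _ j0); apply: eq_bigr => i _.
by rewrite mxE -perm_tr; congr (_ * permanent _); apply/matrixP => a b; rewrite !mxE.
Qed.
End Perm.


Section G.
Variable k : nat.
Notation P := {mpoly rat[k]}.

Definition G m (f : nat -> P) (s : P) : 'M[P]_m :=
  \matrix_(i < m, j < m)
    if (i.+1 == m :> nat)%N then f (m - j)%N
    else if (j <= i)%N then tvar k (i - j).+1
    else if (j == i.+1 :> nat)%N then s
    else 0.

Lemma HmatE n w s : Hmat k n w s = G n (fun j => ((w j)%:~R : rat) *: tvar k j) s.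
Proof. by []. Qed.

Lemma lift_max_val p (i : 'I_p.+1) : (lift ord_max i : nat) = i.
Proof. by rewrite /= /bump leqNgt ltn_ord. Qed.

Lemma ordval n i (h : (i < n)%N) : nat_of_ord (Ordinal h) = i.
Proof. by []. Qed.

Lemma minor1 p f s : row' ord_max (col' ord_max (G p.+2 f s)) = G p.+1 (tvar k) s.
Proof.
apply/matrixP => -[i hi] [j hj]; rewrite !mxE !lift_max_val !ordval.
have {}hi : (i < p.+1)%N := hi; have {}hj : (j < p.+1)%N := hj.
case: (i.+1 =P p.+2) => [Hi|Hi]; first lia.
case: (i.+1 =P p.+1) => [Hi2|Hi2]; last by [].
have -> : (j <= i)%N by lia.
congr (tvar k _); lia.
Qed.

Lemma minor2 p f s : row' (inord p) (col' ord_max (G p.+2 f s)) = G p.+1 (fun x => f x.+1) s.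
Proof.
apply/matrixP => -[i hi] [j hj]; rewrite !mxE lift_max_val.
have -> : (lift (inord p) (Ordinal hi) : nat) = if (i < p)%N then i else i.+1.
  by rewrite /= /bump inordK // leqNgt; case: ltnP.
rewrite !ordval.
have {}hi : (i < p.+1)%N := hi; have {}hj : (j < p.+1)%N := hj.
case: (ltnP i p) => Hip.
  case: (i.+1 =P p.+2) => [Hi|Hi]; first lia.
  case: (i.+1 =P p.+1) => [Hi2|Hi2]; first lia. by [].
case: (i.+2 =P p.+2) => [Hi|Hi]; last lia.
case: (i.+1 =P p.+1) => [Hi2|Hi2]; last lia.
congr f; lia.
Qed.

Lemma lastcol p f s (i : 'I_p.+2) :
  G p.+2 f s i ord_max = if i == ord_max then f 1%N else if i == inord p then s else 0.
Proof.
case: i => i hi.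
have E1 : (Ordinal hi == ord_max) = (i.+1 == p.+2).
  by apply/eqP/eqP => [/(congr1 val) /= H|H]; [lia | apply: val_inj => /=; lia].
have E2 : (Ordinal hi == inord p) = (i == p).
  by apply/eqP/eqP => [/(congr1 val) /= ->|H]; [rewrite inordK | apply: val_inj; rewrite /= inordK].
rewrite E1 E2 !mxE !ordval.
case: (i.+1 =P p.+2) => [Hi|Hi].
  have -> : (p.+2 - p.+1 = 1)%N by lia. by [].
have -> : (p.+1 <= i)%N = false by lia.
case: eqP => [H3|H3]; case: eqP => [H4|H4] //; lia.
Qed.

Lemma myperm0 (A : 'M[P]_0) : permanent A = 1.
Proof.
rewrite /permanent (eq_bigr (fun _ => 1)); last by move=> s _; rewrite big_ord0.
by rewrite sumr_const card_Sn.
Qed.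

Lemma mydet0 (A : 'M[P]_0) : \det A = 1.
Proof. exact: det_mx00. Qed.

Lemma permG1 f s : permanent (G 1 f s) = f 1%N.
Proof.
rewrite (expand_perm_col _ _ _ ord0) big_ord1 myperm0 mulr1 mxE.
by [].
Qed.

Lemma detG1 f s : \det (G 1 f s) = f 1%N.
Proof.
rewrite (expand_det_col _ ord0) big_ord1 /cofactor mydet0 mulr1 expr0 mulr1 mxE.
by [].
Qed.

Lemma permG_rec p f : permanent (G p.+2 f 1) =
  f 1%N * permanent (G p.+1 (tvar k) 1) + permanent (G p.+1 (fun x => f x.+1) 1).
Proof.
rewrite (expand_perm_col _ _ _ ord_max) (bigD1 ord_max) // (bigD1 (inord p)); last first.
  by apply/eqP => /(congr1 (@nat_of_ord _)); rewrite inordK //= => H; lia.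
rewrite big1 ?addr0; last first.
  by move=> i /andP [H1 H2]; rewrite lastcol (negbTE H1) (negbTE H2) mul0r.
rewrite !lastcol eqxx minor1 minor2 ifF; last first.
  by apply/eqP => /(congr1 (@nat_of_ord _)); rewrite inordK //= => H; lia.
rewrite eqxx mul1r.
by congr (_ + _); apply: addr0.
Qed.

Lemma detG_rec p f : \det (G p.+2 f (-1)) =
  f 1%N * \det (G p.+1 (tvar k) (-1)) + \det (G p.+1 (fun x => f x.+1) (-1)).
Proof.
rewrite (expand_det_col _ ord_max) (bigD1 ord_max) // (bigD1 (inord p)); last first.
  by apply/eqP => /(congr1 (@nat_of_ord _)); rewrite inordK //= => H; lia.
rewrite big1 ?addr0; last first.
  by move=> i /andP [H1 H2]; rewrite lastcol (negbTE H1) (negbTE H2) mul0r.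
rewrite !lastcol eqxx /cofactor minor1 minor2 ifF ?eqxx; last first.
  by apply/eqP => /(congr1 (@nat_of_ord _)); rewrite inordK //= => H; lia.
have -> : ((ord_max : 'I_p.+2) + (ord_max : 'I_p.+2) = p.+1 + p.+1)%N by [].
have -> : ((inord p : 'I_p.+2) + (ord_max : 'I_p.+2) = p + p.+1)%N by rewrite inordK.
rewrite -[(-1) ^+ (p.+1 + p.+1)]signr_odd addnn odd_double expr0 mul1r.
rewrite mulrA -exprS -signr_odd addnS !oddS negbK addnn odd_double expr0 mul1r.
by congr (_ + _); apply: addr0.
Qed.

Lemma Frec (F : nat -> (nat -> P) -> P) :
  (forall f, F 0%N f = 1) -> (forall f, F 1%N f = f 1%N) ->
  (forall p f, F p.+2 f = f 1%N * F p.+1 (tvar k) + F p.+1 (fun x => f x.+1)) ->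
  forall m f, F m.+1 f = \sum_(i < m.+1) f i.+1 * F (m - i)%N (tvar k).
Proof.
move=> F0 F1 FS; elim=> [|m IH] f.
  by rewrite big_ord1 F1 F0 mulr1.
rewrite FS (IH (fun x => f x.+1)) [RHS]big_ord_recl subn0; congr (_ + _).
Qed.
End G.


Lemma prod_fact_dvd (s : seq nat) : (\prod_(x <- s) x`! %| (sumn s)`!)%N.
Proof.
elim: s => [|x s IH]; first by rewrite big_nil.
rewrite big_cons /= -(bin_fact (leq_addr (sumn s) x)) addKn.
by rewrite dvdn_mull // dvdn_mul.
Qed.

Section Mult.
Variable k : nat.
Implicit Types m : 'X_{1..k}.

Definition mult m := multinomial [seq (m j : nat) | j <- enum 'I_k].

Lemma sumn_map m : sumn [seq (m j : nat) | j <- enum 'I_k] = mdeg m.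
Proof. by rewrite mdegE sumnE big_map big_enum. Qed.

Lemma prod_map m : (\prod_(x <- [seq (m j : nat) | j <- enum 'I_k]) x`! = \prod_(j < k) (m j)`!)%N.
Proof. by rewrite big_map big_enum. Qed.

Lemma mult_fact m : (mult m)%:R = ((mdeg m)`!)%:R / (\prod_(j<k) (m j)`!)%:R :> rat.
Proof.
rewrite /mult /multinomial natr_div.
- by rewrite sumn_map prod_map.
- exact: prod_fact_dvd.
by rewrite unitfE pnatr_eq0 -lt0n prodn_gt0 // => i; rewrite fact_gt0.
Qed.

Lemma mult_rec m (j : 'I_k) : (0 < m j)%N ->
  (mult (m - U_(j))%MM)%:R * (mdeg m)%:R = (mult m)%:R * (m j)%:R :> rat.
Proof.
move=> mj.
have dm : mdeg m = (mdeg (m - U_(j))%MM).+1.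
  rewrite !mdegE (bigD1 j) //= [in RHS](bigD1 j) //= mnmBE mnm1E eqxx.
  rewrite [in RHS](eq_bigr (fun i => m i)) => [|i /negbTE ij]; last first.
    by rewrite mnmBE mnm1E eq_sym ij subn0.
  lia.
rewrite !mult_fact dm factS.
rewrite (bigD1 j) //= [X in _ = _ / X%:R * _](bigD1 j) //=.
rewrite (eq_bigr (fun i => (m i)`!) (P := fun i => i != j)) => [|i /negbTE ij]; last first.
  by rewrite mnmBE mnm1E eq_sym ij subn0.
rewrite mnmBE mnm1E eqxx.
have -> : (m j = (m j - 1).+1)%N by lia.
rewrite factS subSS subn0 !natrM.
set A := (mdeg _)`!%:R; set B := (m j - 1)`!%:R; set C := (\prod_(_ < k | _) _)%:R.
have hB : B != 0 by rewrite pnatr_eq0 -lt0n fact_gt0.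
have hC : C != 0 by rewrite pnatr_eq0 -lt0n prodn_gt0 // => i; rewrite fact_gt0.
have hm : ((m j - 1).+1)%:R != 0 :> rat by rewrite pnatr_eq0.
rewrite -[(mdeg (m - U_(j)))%MM.+1]/((mdeg (m - U_(j)))%MM.+1).
field.
apply/and3P; split; [exact: hC | exact: hB | by rewrite addrC natr1 pnatr_eq0].
Qed.
End Mult.


Arguments mult {k}.
Section Main.
Variable k : nat.
Notation P := {mpoly rat[k]}.
Implicit Types m : 'X_{1..k}.

Lemma coefXM (i : 'I_k) (p : P) m :
  ('X_i * p)@_m = if (0 < m i)%N then p@_(m - U_(i))%MM else 0.
Proof.
rewrite mulrC; case: ifP => h.
  have E : m = (U_(i) + (m - U_(i)))%MM.
    apply/mnmP => j; rewrite mnmDE mnmBE mnm1E.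
    case: (i =P j) => [<-|_]; [lia | by rewrite add0n subn0].
  by rewrite {1}E mcoeffMX.
apply/eqP; rewrite mcoeff_eq0 (perm_mem (msuppMX _ _)).
apply/mapP => -[m' _ Hm].
by move: h; rewrite Hm mnmDE mnm1E eqxx.
Qed.

Lemma tvarS (j : 'I_k) : tvar k j.+1 = 'X_j.
Proof.
rewrite /tvar /=; case: insubP => [i _ /= Hi|]; last by rewrite ltn_ord.
by congr ('X_ _); apply: val_inj.
Qed.

Lemma tvar_big i : (k <= i)%N -> tvar k i.+1 = 0.
Proof. by move=> h; rewrite /tvar /=; case: insubP => [i' Hi _|//]; lia. Qed.

Lemma sum_cut N (h : nat -> P) : (forall i, (k <= i)%N -> h i = 0) ->
  \sum_(i < N) h i = \sum_(j < k | (j < N)%N) h j.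
Proof.
move=> hz.
rewrite [LHS](big_ord_widen_cond (N + k) (fun _ => true) h) ?leq_addr //.
rewrite [RHS](big_ord_widen_cond (N + k) (fun i => (i < N)%N) h) ?leq_addl //.
rewrite [LHS]big_mkcond [RHS]big_mkcond; apply: eq_bigr => i _ /=.
by case: (ltnP i N) => //=; case: (ltnP i k) => //= H _; rewrite hz.
Qed.

Definition wt m := (\sum_(j < k) j.+1 * m j)%N.

Lemma wtB m (j : 'I_k) : (0 < m j)%N -> (wt (m - U_(j))%MM + j.+1 = wt m)%N.
Proof.
move=> h; rewrite /wt (bigD1 j) //= [in RHS](bigD1 j) //= mnmBE mnm1E eqxx.
rewrite [X in ((_ + X) + _)%N](eq_bigr (fun i : 'I_k => i.+1 * m i)%N) => [|i /negbTE ij]; last first.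
  by rewrite mnmBE mnm1E eq_sym ij subn0.
nia.
Qed.

Lemma wt_ge m (j : 'I_k) : (j.+1 * m j <= wt m)%N.
Proof. by rewrite /wt (bigD1 j) //= leq_addr. Qed.

Lemma wt_ge1 m (j : 'I_k) : (0 < m j)%N -> (j.+1 <= wt m)%N.
Proof. by move=> h; apply: leq_trans (wt_ge m j); rewrite leq_pmulr. Qed.

Lemma wt0 m : (wt m == 0%N) = (m == 0%MM).
Proof.
apply/eqP/eqP => [H|->].
  apply/mnmP => j; rewrite mnm0E; have := wt_ge m j; rewrite H; nia.
by rewrite /wt big1 // => j _; rewrite mnm0E muln0.
Qed.

Lemma mult0 : (mult (0%MM : 'X_{1..k}))%:R = 1 :> rat.
Proof.
rewrite mult_fact mdeg0 big1 ?divr1 // => j _.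
by rewrite mnm0E.
Qed.

Lemma cond_eq m d (j : 'I_k) : (0 < m j)%N ->
  ((j < d.+1)%N && (wt (m - U_(j))%MM == d - j)%N) = (wt m == d.+1).
Proof.
move=> h; have := wtB _ _ h; have := wt_ge1 _ _ h => h1 h2.
case: (ltnP j d.+1) => hj /=.
  by apply/eqP/eqP; lia.
by apply/esym/eqP; lia.
Qed.

Lemma mdeg_ne0 m d : wt m = d.+1 -> (mdeg m)%:R != 0 :> rat.
Proof.
move=> h; rewrite pnatr_eq0 mdeg_eq0; apply/eqP => E.
by move: (wt0 m); rewrite h E eqxx.
Qed.

Lemma char (q : nat -> P) : q 0%N = 1 ->
  (forall d, q d.+1 = \sum_(i < d.+1) tvar k i.+1 * q (d - i)%N) ->
  forall d m, (q d)@_m = (wt m == d)%:R * (mult m)%:R.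
Proof.
move=> q0 qS d; elim/ltn_ind: d => d IH m.
case: d IH => [|d] IH.
  rewrite q0 mcoeff1 wt0; case: (m =P 0%MM) => [->|_].
    by rewrite mult0 mulr1.
  by rewrite mul0r.
rewrite qS (sum_cut _ (fun i => tvar k i.+1 * q (d - i)%N)); last first.
  by move=> i hi; rewrite tvar_big // mul0r.
rewrite raddf_sum /=.
rewrite (eq_bigr (fun j : 'I_k => if (0 < m j)%N && (wt m == d.+1) then (mult (m - U_(j))%MM)%:R else 0)); last first.
  move=> j hj; rewrite tvarS coefXM; case: ifP => h //=.
  rewrite IH; last by lia.
  by rewrite -(cond_eq _ d _ h) hj /=; case: eqP; rewrite ?mul1r ?mul0r.
rewrite big_mkcond /=.
case: (wt m =P d.+1) => hw; last first.
  by rewrite mul0r big1 // => j _; rewrite andbF if_same.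
rewrite mul1r; apply: (mulIf (mdeg_ne0 _ _ hw)); rewrite mulr_suml.
rewrite (eq_bigr (fun j : 'I_k => (mult m)%:R * (m j)%:R)); last first.
  move=> j _; rewrite andbT; case: (ltnP j d.+1) => hj /=.
    case: (posnP (m j)) => h.
      by rewrite h /= mul0r mulr0.
    by rewrite (mult_rec _ _ _ h).
  case: (posnP (m j)) => h; first by rewrite h mul0r mulr0.
  have := wt_ge1 _ _ h; lia.
by rewrite -mulr_sumr -natr_sum -mdegE.
Qed.
End Main.

Arguments mult {k}.
Arguments wt {k}.
Arguments wt_ge {k}. Arguments wt_ge1 {k}. Arguments cond_eq {k}. Arguments mult_rec {k}. Arguments mdeg_ne0 {k}. Arguments wtB {k}.

Section Fin.
Variable k : nat.
Notation P := {mpoly rat[k]}.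
Implicit Types m : 'X_{1..k}.

Lemma coefPw n w m : (Pw k n w)@_m =
  if wt m == n then (mult m)%:R *
    ((\sum_(j < k) ((w j.+1)%:~R : rat) * (m j)%:R) / (mdeg m)%:R) else 0.
Proof.
rewrite /Pw raddf_sum /=.
pose mon (a : {ffun 'I_k -> 'I_n.+1}) := [multinom (a j : nat) | j < k].
have hX (a : {ffun 'I_k -> 'I_n.+1}) : \prod_(j < k) 'X_j ^+ a j = 'X_[mon a] :> P.
  by rewrite mpolyXE_id; apply: eq_bigr => j _; rewrite mnmE.
under eq_bigr => a _ do rewrite hX mcoeffZ mcoeffX.
case: (wt m =P n) => hw; last first.
  apply: big1 => a /eqP ha; case: eqP => E; last by rewrite mulr0.
  case: hw; rewrite -E -ha /wt; apply: eq_bigr => j _; by rewrite mnmE.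
have hle j : (m j < n.+1)%N by have := wt_ge m j; rewrite hw; nia.
pose a0 : {ffun 'I_k -> 'I_n.+1} := [ffun j => Ordinal (hle j)].
have e j : (a0 j : nat) = m j by rewrite ffunE.
have ha0 : mon a0 = m by apply/mnmP => j; rewrite mnmE e.
rewrite (bigD1 a0) /=; last first.
  by rewrite -[X in _ == X]hw /wt; apply/eqP; apply: eq_bigr => j _; rewrite e.
rewrite [\sum_(i | _ && (i != a0)) _]big1 ?addr0; last first.
  move=> a /andP [_ ne]; case: eqP => E; last by rewrite mulr0.
  case/eqP: ne; apply/ffunP => j; apply: ord_inj; rewrite e.
  by have := congr1 (fun mm : 'X_{1..k} => mm j) E; rewrite /= mnmE.
rewrite ha0 eqxx mulr1 /mult (eq_map e); congr (_ * (_ / _)).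
  by apply: eq_bigr => j _; rewrite e.
by rewrite mdegE; congr (_%:R); apply: eq_bigr => j _; rewrite e.
Qed.

Arguments Frec {k}.
Arguments char {k}.
Arguments sum_cut {k}.

Lemma final (F : nat -> (nat -> P) -> P) :
  (forall f, F 0%N f = 1) -> (forall f, F 1%N f = f 1%N) ->
  (forall p f, F p.+2 f = f 1%N * F p.+1 (tvar k) + F p.+1 (fun x => f x.+1)) ->
  forall n w, (1 <= n)%N -> F n (fun j => ((w j)%:~R : rat) *: tvar k j) = Pw k n w.
Proof.
move=> F0 F1 FS [//|n'] w _.
have qc := char (fun d => F d (tvar k)) (F0 _) (fun d => Frec F F0 F1 FS d (tvar k)).
rewrite (Frec F F0 F1 FS).
apply/mpolyP => m; rewrite coefPw.
rewrite (sum_cut _ (fun i => (((w i.+1)%:~R : rat) *: tvar k i.+1) * F (n' - i)%N (tvar k))); last first.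
  by move=> i hi; rewrite tvar_big // scaler0 mul0r.
rewrite raddf_sum /=.
under eq_bigr => j _ do rewrite tvarS -scalerAl mcoeffZ (coefXM k j) qc.
rewrite big_mkcond /=.
case: (wt m =P n'.+1) => hw; last first.
  apply: big1 => j _; case: ifP => hj //; case: ifP => h; last by rewrite mulr0.
  move: (cond_eq m n' j h); rewrite hj /= => ->.
  by move/eqP/negbTE: hw => ->; rewrite mul0r mulr0.
rewrite mulr_suml mulr_sumr; apply: eq_bigr => j _.
case: (posnP (m j)) => h.
  by rewrite h mulr0 mul0r mulr0; case: ifP; rewrite ?mulr0.
have hj : (j < n'.+1)%N by have := wt_ge1 m j h; lia.
rewrite hj.
move: (cond_eq m n' j h); rewrite hj hw eqxx /= => ->.
rewrite -[(mult (m - U_(j))%MM)%:R](mulfK (mdeg_ne0 m n' hw)) (mult_rec m j h).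
by rewrite mul1r !mulrA [_ * (mult m)%:R]mulrC.
Qed.
End Fin.

Theorem theorem14 (k n : nat) (hk : (1 <= k)%N) (hn : (1 <= n)%N) (w : nat -> int) :
  permanent (Hmat k n w 1) = Pw k n w /\ \det (Hmat k n w (-1)) = Pw k n w.
Proof.
rewrite !HmatE; split.
  exact: (@final k (fun m f => permanent (G k m f 1)) (fun f => myperm0 _ _)
    (fun f => permG1 _ f 1) (fun p f => permG_rec _ p f) n w hn).
have := (@final k (fun m f => \det (G k m f (-1))) (fun f => mydet0 _ _)
    (fun f => detG1 _ f (-1)) (fun p f => detG_rec _ p f) n w hn).
by [].
Qed.
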